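(* Let $0<\alpha<\beta<\infty$, $\mathcal{F}\subset\mathcal{F}_B^{[\alpha,\beta]}$ star-shaped with $L_2$-diameter $d$, $N\in\mathbb{N}$, and define $\tau^*:=\sup\{\tau:N\tau^2\le\log\mathcal{M}^{\mathrm{loc}}_{\mathcal{F}}(\tau,c)\}$, where $c$ is a sufficiently large absolute constant. If $\epsilon<k/N$ for a constant $k>7$, then $$\max\{\tau^{*2}\wedge d^2,\ \epsilon\wedge d^2\}\asymp\tau^{*2}\wedge d^2$$ (equality up to constant factors).
   Context: $B\subseteq\mathbb{R}^p$ compact Borel with positive measure, $\mu$ a probability measure on $B$; $\mathcal{F}_B^{[\alpha,\beta]}$ the measurable $f:B\to[\alpha,\beta]$ with $\int_Bf\,d\mu=1$, $\|f-g\|_2=(\int_B(f-g)^2d\mu)^{1/2}$, $B_2(g,r)$ the closed $L_2$-ball; $\mathcal{F}$ star-shaped (some $f_0\in\mathcal{F}$ with $tf+(1-t)f_0\in\mathcal{F}$ for $f\in\mathcal{F},t\in[0,1]$). $\mathcal{M}(\eta,S)$ is the maximal cardinality of a subset of $S$ with pairwise $L_2$ distances $>\eta$, and $\mathcal{M}^{\mathrm{loc}}_{\mathcal{F}}(\tau,c)=\sup_{g\in\mathcal{F}}\mathcal{M}(\tau/c,\mathcal{F}\cap B_2(g,\tau))$. $a\asymp b$ means $a\lesssim b$ and $b\lesssim a$ with constants independent of $N,\epsilon$. *)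

(* Defs.v *)
From HB Require Import structures.
From mathcomp Require Import all_boot all_order all_algebra.
From mathcomp Require Import all_classical all_reals all_analysis.
Set Implicit Arguments. Unset Strict Implicit. Unset Printing Implicit Defensive.
Import Order.TTheory GRing.Theory Num.Theory.
Import numFieldNormedType.Exports.
Local Open Scope classical_set_scope.
Local Open Scope ring_scope.

Definition Rp (R : realType) (p : nat) := g_sigma_algebraType (@open 'rV[R]_p).

Section defs.
Context {R : realType} {p : nat}.
Local Notation T := (Rp R p).

Definition L2dist (mu : {measure set T -> \bar R}) (B : set T) (f g : T -> R) : R :=
  Num.sqrt (fine (\int[mu]_(x in B) ((f x - g x) ^+ 2)%:E)%E).

Definition densities (mu : {measure set T -> \bar R}) (B : set T) (alpha beta : R)
  : set (T -> R) :=
  [set f | measurable_fun B f /\ (forall x, B x -> alpha <= f x <= beta) /\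
           (\int[mu]_(x in B) (f x)%:E = 1)%E].

Definition star_shaped (F : set (T -> R)) : Prop :=
  exists2 f0, F f0 & forall f t, F f -> 0 <= t <= 1 ->
     F (fun x => t * f x + (1 - t) * f0 x).

Definition L2ball mu B (g : T -> R) (r : R) : set (T -> R) :=
  [set f | L2dist mu B f g <= r].

Definition L2diam mu B (F : set (T -> R)) : \bar R :=
  ereal_sup [set (L2dist mu B f g)%:E | f in F & g in F].

Definition packing mu B (eta : R) (S : set (T -> R)) : \bar R :=
  ereal_sup [set (n%:R)%:E | n in [set n : nat | exists P : 'I_n -> (T -> R),
     (forall i, S (P i)) /\
     (forall i j, i != j -> eta < L2dist mu B (P i) (P j))]].

Definition local_packing mu B (F : set (T -> R)) (tau c : R) : \bar R :=
  ereal_sup [set packing mu B (tau / c) (F `&` L2ball mu B g tau) | g in F].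

Definition elog (x : \bar R) : \bar R :=
  match x with
  | r%:E => (ln r)%:E
  | +oo%E => +oo%E
  | -oo%E => -oo%E
  end.

Definition tau_star mu B (F : set (T -> R)) (N : nat) (c : R) : \bar R :=
  ereal_sup [set tau%:E | tau in [set tau : R | 0 <= tau /\
     ((N%:R * tau ^+ 2)%:E <= elog (local_packing mu B F tau c))%E]].

End defs.

(* Main.v *)
Require Import Defs.
From HB Require Import structures.
From mathcomp Require Import all_boot all_order all_algebra.
From mathcomp Require Import all_classical all_reals all_analysis measurable_realfun.
From mathcomp Require Import ring lra.
Import Order.TTheory GRing.Theory Num.Theory.
Import numFieldNormedType.Exports.
Local Open Scope classical_set_scope.
Local Open Scope ring_scope.

Section helpers.
Context {R : realType} {p : nat}.
Local Notation T := (Rp R p).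
Context {mu : {measure set T -> \bar R}} {B : set T} {alpha beta : R}.
Hypotheses (mB : measurable B) (muB : mu B = 1%E).

Lemma msq (f g : T -> R) : measurable_fun B f -> measurable_fun B g ->
  measurable_fun B (fun x => ((f x - g x) ^+ 2)%:E).
Proof.
move=> mf mg.
have h := measurable_funX 2 (measurable_funB mf mg).
by apply/(measurable_EFinP _ (fun x => (f x - g x) ^+ 2)).
Qed.

Lemma int_bnd {f g} : densities mu B alpha beta f -> densities mu B alpha beta g ->
  (0 <= \int[mu]_(x in B) ((f x - g x) ^+ 2)%:E <= ((beta - alpha) ^+ 2)%:E)%E.
Proof.
move=> [mf [bf _]] [mg [bg _]]; apply/andP; split.
  by apply: integral_ge0 => x _; rewrite lee_fin sqr_ge0.
rewrite -[X in (_ <= X)%E]mule1 -muB -integral_cst //.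
apply: ge0_le_integral => //.
- by move=> x _; rewrite lee_fin sqr_ge0.
- exact: msq.
move=> x Bx; rewrite lee_fin /=.
have /andP[h1 h2] := bf x Bx; have /andP[h3 h4] := bg x Bx.
nra.
Qed.

Lemma int_fin {f g} : densities mu B alpha beta f -> densities mu B alpha beta g ->
  (\int[mu]_(x in B) ((f x - g x) ^+ 2)%:E)%E =
  (fine ((\int[mu]_(x in B) ((f x - g x) ^+ 2)%:E)%E))%:E.
Proof.
move=> Hf Hg; have /andP[h1 h2] := int_bnd Hf Hg.
rewrite fineK // ge0_fin_numE //; exact: (le_lt_trans h2 (ltry _)).
Qed.

Lemma fine_ge0' f g : (0 <= fine ((\int[mu]_(x in B) ((f x - g x) ^+ 2)%:E)%E))%R.
Proof.
apply: fine_ge0; apply: integral_ge0 => x _; by rewrite lee_fin sqr_ge0.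
Qed.

Lemma L2dist_sym f g : L2dist mu B f g = L2dist mu B g f.
Proof.
rewrite /L2dist; congr (Num.sqrt (fine _)); apply: eq_integral => x _.
by rewrite -sqrrN opprB.
Qed.

Lemma L2dist_ge0 f g : 0 <= L2dist mu B f g.
Proof. exact: sqrtr_ge0. Qed.

Lemma L2dist_scale {f f0 t} : densities mu B alpha beta f ->
  densities mu B alpha beta f0 -> 0 <= t ->
  L2dist mu B (fun x => t * f x + (1 - t) * f0 x) f0 = t * L2dist mu B f f0.
Proof.
move=> Hf Hf0 t0; rewrite /L2dist.
have -> : (\int[mu]_(x in B) ((t * f x + (1 - t) * f0 x - f0 x) ^+ 2)%:E)%E =
   ((t ^+ 2)%:E * (\int[mu]_(x in B) ((f x - f0 x) ^+ 2)%:E)%E)%E.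
  transitivity (\int[mu]_(x in B) ((t ^+ 2)%:E * ((f x - f0 x) ^+ 2)%:E))%E.
    by apply: eq_integral => x _; rewrite -EFinM; congr EFin; ring.
  rewrite ge0_integralZl_EFin //; last by rewrite sqr_ge0.
  - by move=> x _; rewrite lee_fin sqr_ge0.
  - exact: msq (proj1 Hf) (proj1 Hf0).
rewrite int_fin // -EFinM /= sqrtrM ?sqr_ge0 // sqrtr_sqr ger0_norm //.
Qed.

Lemma L2dist_tri {f g h} : densities mu B alpha beta f ->
  densities mu B alpha beta g -> densities mu B alpha beta h ->
  fine ((\int[mu]_(x in B) ((f x - g x) ^+ 2)%:E)%E) <=
  2 * fine ((\int[mu]_(x in B) ((f x - h x) ^+ 2)%:E)%E) +
  2 * fine ((\int[mu]_(x in B) ((h x - g x) ^+ 2)%:E)%E).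
Proof.
move=> Hf Hg Hh.
have mf := proj1 Hf; have mg := proj1 Hg; have mh := proj1 Hh.
rewrite -lee_fin -int_fin // EFinD !EFinM -!int_fin //.
rewrite -!ge0_integralZl_EFin //; first last.
- exact: msq.
- by move=> x _; rewrite lee_fin sqr_ge0.
- exact: msq.
- by move=> x _; rewrite lee_fin sqr_ge0.
rewrite -ge0_integralD //; first last.
- by apply: emeasurable_funM => //; exact: msq.
- by move=> x _; rewrite -EFinM lee_fin mulr_ge0 // sqr_ge0.
- by apply: emeasurable_funM => //; exact: msq.
- by move=> x _; rewrite -EFinM lee_fin mulr_ge0 // sqr_ge0.
apply: ge0_le_integral => //.
- by move=> x _; rewrite lee_fin sqr_ge0.
- exact: msq.
- by apply: emeasurable_funD; apply: emeasurable_funM => //; exact: msq.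
move=> x _; rewrite -!EFinM -EFinD lee_fin.
have := sqr_ge0 ((f x - h x) - (h x - g x)); nra.
Qed.

End helpers.

Section more.
Context {R : realType} {p : nat}.
Local Notation T := (Rp R p).

Lemma L2dist_self (mu : {measure set T -> \bar R}) B (f : T -> R) :
  L2dist mu B f f = 0.
Proof.
rewrite /L2dist (_ : (\int[mu]_(x in B) ((f x - f x) ^+ 2)%:E)%E = 0%E).
  by rewrite /= sqrtr0.
rewrite (eq_integral (fun _ => 0%E)) ?integral0 // => x _.
by rewrite subrr expr0n.
Qed.

Lemma L2dist_le0 {mu : {measure set T -> \bar R}} {B} {f g : T -> R} :
  L2dist mu B f g <= 0 ->
  fine (\int[mu]_(x in B) ((f x - g x) ^+ 2)%:E)%E <= 0.
Proof.
move=> h; have h0 : L2dist mu B f g = 0 by apply/le_anti; rewrite h sqrtr_ge0.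
by move: h0; rewrite /L2dist => /eqP; rewrite sqrtr_eq0.
Qed.

Lemma esqr_ge0 (x : \bar R) : (0 <= x * x)%E.
Proof.
case: x => [r||] /=; last 2 first.
- by rewrite mulyy.
- by rewrite mulNyNy.
by rewrite -EFinM lee_fin -expr2 sqr_ge0.
Qed.

End more.

Theorem mainTheorem5 (R : realType) :
  exists c0 : R, forall c : R, c0 <= c ->
  forall k : R, 7 < k ->
  forall (p : nat) (B : set (Rp R p))
    (mu : probability (Rp R p) R) (alpha beta : R) (F : set (Rp R p -> R)),
    compact (B : set 'rV[R]_p) -> measurable B -> mu B = 1%E ->
    0 < alpha -> alpha < beta ->
    F `<=` densities mu B alpha beta -> star_shaped F ->
  exists C : R, 0 < C /\
  forall (N : nat) (eps : R), (0 < N)%N -> 0 < eps -> eps < k / N%:R ->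
    let d2 := (L2diam mu B F * L2diam mu B F)%E in
    let t2 := (tau_star mu B F N c * tau_star mu B F N c)%E in
    let lhs := Order.max (Order.min t2 d2) (Order.min eps%:E d2) in
    (lhs <= C%:E * Order.min t2 d2 /\ Order.min t2 d2 <= C%:E * lhs)%E.
Proof.
exists 2 => c c2 k k7 p B mu alpha beta F cB mB muB a0 ab sF [f0 Ff0 star].
have Df0 := sF _ Ff0.
have D0 : (0 <= L2diam mu B F)%E.
  apply: le_trans (ereal_sup_ubound _); last by exists f0 => //; exists f0.
  by rewrite lee_fin L2dist_ge0.
case: (pselect (exists f, F f /\ 0 < L2dist mu B f f0)); last first.
  move=> nex.
  have Hle : forall f, F f -> L2dist mu B f f0 <= 0.
    by move=> f Ff; rewrite leNgt; apply/negP => h; apply: nex; exists f.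
  have DD : L2diam mu B F = 0%E.
    apply/le_anti; rewrite D0 andbT; apply: ge_ereal_sup.
    move=> _ [f Ff [g Fg <-]]; rewrite lee_fin.
    have h1 := L2dist_le0 (Hle _ Ff).
    have h2 : L2dist mu B f0 g <= 0 by rewrite L2dist_sym Hle.
    have h3 := L2dist_le0 h2.
    have h4 := L2dist_tri mB muB (sF _ Ff) (sF _ Fg) Df0.
    have : L2dist mu B f g = 0.
      by apply/eqP; rewrite sqrtr_eq0; apply: le_trans h4 _; nra.
    by move=> ->.
  exists 1; split => // N eps N0 e0 ek d2 t2 lhs.
  have t20 : (0 <= t2)%E by apply: esqr_ge0.
  have d20 : d2 = 0%E by rewrite /d2 DD mul0e.
  have -> : Order.min t2 d2 = 0%E by rewrite d20 min_r.
  have -> : lhs = 0%E.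
    rewrite /lhs d20 min_r ?lee_fin ?(ltW e0) // (min_r (_ : 0 <= eps%:E)%E) ?lee_fin ?(ltW e0) //.
    by apply/le_anti; rewrite ge_max le_max !lexx.
  by rewrite mul1e.
move=> [f [Ff rpos]].
have Df := sF _ Ff.
set r := L2dist mu B f f0 in rpos.
have ln2 : 0 < ln (2 : R) by apply: ln_gt0; rewrite ltr1n.
set m := Num.min (ln (2 : R)) (r ^+ 2).
have m0 : 0 < m by rewrite lt_min ln2 exprn_gt0.
have mr : m <= r ^+ 2 by rewrite ge_min lexx orbT.
have ml : m <= ln 2 by rewrite ge_min lexx.
exists (Num.max 1 (k / m)); split; first by rewrite lt_max ltr01.
move=> N eps N0 e0 ek d2 t2 lhs.
have N0' : (0 < N%:R :> R) by rewrite ltr0n.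
have mN0 : 0 < m / N%:R by rewrite divr_gt0.
have mNm : m / N%:R <= m.
  by rewrite ler_pdivrMr // ler_peMr ?(ltW m0) // ler1n.
have HD : (r%:E <= L2diam mu B F)%E.
  by apply: ereal_sup_ubound; exists f => //; exists f0.
have Hd2 : ((m / N%:R)%:E <= d2)%E.
  apply: le_trans (_ : ((r ^+ 2)%:E <= d2)%E).
    by rewrite lee_fin (le_trans mNm mr).
  by rewrite /d2 expr2 EFinM lee_pmul // lee_fin ltW.
set tau := Num.sqrt (m / N%:R).
have tau0 : 0 < tau by rewrite sqrtr_gt0.
have tau2 : tau ^+ 2 = m / N%:R by rewrite sqr_sqrtr // ltW.
have taur : tau <= r.
  rewrite -(ger0_norm (ltW rpos)) -sqrtr_sqr ler_sqrt ?sqr_ge0 //.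
  exact: le_trans mNm mr.
have Ht2 : ((m / N%:R)%:E <= t2)%E.
  have Htau : (tau%:E <= tau_star mu B F N c)%E.
    apply: ereal_sup_ubound; exists tau => //; split; first exact: ltW.
    rewrite tau2 mulrC divfK ?lt0r_neq0 //.
    have Hpack : ((2%:R)%:E <= local_packing mu B F tau c)%E.
      apply: le_trans (ereal_sup_ubound _); last first.
        by exists f0.
      apply: ereal_sup_ubound; exists 2%N => //.
      set t := tau / r.
      have t0 : 0 <= t by rewrite divr_ge0 // ltW.
      have t1 : t <= 1 by rewrite ler_pdivrMr // mul1r.
      set h := fun x => t * f x + (1 - t) * f0 x.
      have Fh : F h by apply: star => //; rewrite t0 t1.
      have dh : L2dist mu B h f0 = tau.
        rewrite (L2dist_scale mB muB Df Df0 t0) /t -/r divfK //.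
        by rewrite gt_eqF.
      have tauc : tau / c < tau.
        rewrite ltr_pdivrMr ?(lt_le_trans _ c2) // ltr_pMr //.
        by rewrite (lt_le_trans _ c2) // ltr1n.
      exists (fun i : 'I_2 => if val i == 0%N then f0 else h); split.
        move=> [[|[|i]] Hi] //=; split => //.
        - by rewrite /L2ball /= L2dist_self ltW.
        - by rewrite /L2ball /= dh.
      move=> [[|[|i]] Hi] [[|[|j]] Hj] //= Hne.
      - by rewrite L2dist_sym dh.
      - by rewrite dh.
    move: Hpack; case: (local_packing mu B F tau c) => [x||] //= Hx.
      rewrite lee_fin; apply: le_trans ml _.
      move: Hx; rewrite lee_fin => Hx; rewrite ler_ln ?posrE // (lt_le_trans _ Hx) //.
    by rewrite leey.
  apply: le_trans (_ : (tau%:E * tau%:E <= t2)%E).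
    by rewrite -EFinM -expr2 tau2.
  by rewrite /t2 lee_pmul // lee_fin ltW.
set u := Order.min t2 d2.
have Hu : ((m / N%:R)%:E <= u)%E by rewrite le_min Ht2 Hd2.
have u0 : (0 <= u)%E by apply: le_trans Hu; rewrite lee_fin ltW.
have C1 : (1 <= (Num.max 1 (k / m))%:E)%E by rewrite lee_fin le_max lexx.
have C0 : (0 <= (Num.max 1 (k / m))%:E)%E.
  by apply: le_trans C1; rewrite lee_fin.
have uul : (u <= lhs)%E by rewrite /lhs le_max lexx.
split.
  rewrite /lhs ge_max lee_pemull //=.
  rewrite ge_min; apply/orP; left.
  apply: le_trans (lee_wpmul2l C0 Hu).
  rewrite -EFinM lee_fin; apply: (le_trans (ltW ek)).
  have km : k / N%:R = (k / m) * (m / N%:R) by field; rewrite ?gt_eqF.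
  rewrite km ler_wpM2r ?(ltW mN0) //.
  by rewrite le_max lexx orbT.
apply: (le_trans uul).
by rewrite lee_pemull // (le_trans u0 uul).
Qed.
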